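(* Let $(X,d)$ be a compact metric space, $\mathbb{F}=\{f_n:n\in\mathbb{N}\}$ a sequence of continuous surjective self-maps of $X$, and $k\in\mathbb{N}$. If $(X,\mathbb{F})$ is sensitive then $(X,\mathbb{F}_k)$ is sensitive. If the family $\mathbb{F}$ is feeble open, then $(X,\mathbb{F}_k)$ sensitive implies $(X,\mathbb{F})$ sensitive.
   Context: Write $\omega_n=f_n\circ\cdots\circ f_1$ and, for $n>k$, $\omega^k_n=f_n\circ\cdots\circ f_{k+1}$; $\mathbb{F}_k=\{f_n:n\ge k+1\}$ is the truncated family. $(X,\mathbb{F})$ is sensitive if there is $\delta>0$ such that for every $x\in X$ and every neighborhood $U$ of $x$ there is $n\in\mathbb{N}$ with $\mathrm{diam}(\omega_n(U))>\delta$; $(X,\mathbb{F}_k)$ is sensitive if the same holds with $\omega^k_n$ ($n>k$). $\mathbb{F}$ is feeble open if for every non-empty open $U$ and every $f\in\mathbb{F}$, $f(U)$ has non-empty interior. *)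

(* Defs.v *)
From HB Require Import structures.
From mathcomp Require Import all_boot all_order all_algebra.
From mathcomp Require Import all_classical all_reals all_analysis.
Set Implicit Arguments. Unset Strict Implicit. Unset Printing Implicit Defensive.
Import Order.TTheory GRing.Theory Num.Theory.
Local Open Scope classical_set_scope.
Local Open Scope ring_scope.

(* Diameter of a subset of a metric space, as an extended real
   (sup of pairwise distances; -oo for the empty set). *)
Definition diam {R : realType} {X : metricType R} (A : set X) : \bar R :=
  ereal_sup [set (mdist x y)%:E | x in A & y in A].

(* comp_from f k n = f n \o ... \o f (k+1)  for n > k, and id for n <= k.
   The family is indexed from 1: F = {f 1, f 2, ...}; f 0 is never used. *)
Fixpoint comp_from {X : Type} (f : nat -> X -> X) (k n : nat) : X -> X :=
  match n with
  | 0 => id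
  | n'.+1 => if (k < n'.+1)%N then f n'.+1 \o comp_from f k n' else id
  end.

Definition omega {X : Type} (f : nat -> X -> X) (n : nat) : X -> X :=
  comp_from f 0 n.

Definition omega_k {X : Type} (f : nat -> X -> X) (k n : nat) : X -> X :=
  comp_from f k n.

Definition sensitive {R : realType} {X : metricType R} (f : nat -> X -> X) : Prop :=
  exists delta : R, 0 < delta /\
    forall (x : X) (U : set X), nbhs x U ->
      exists n : nat, (0 < n)%N /\ (delta%:E < diam (omega f n @` U))%E.

Definition sensitive_trunc {R : realType} {X : metricType R}
    (f : nat -> X -> X) (k : nat) : Prop :=
  exists delta : R, 0 < delta /\
    forall (x : X) (U : set X), nbhs x U ->
      exists n : nat, (k < n)%N /\ (delta%:E < diam (omega_k f k n @` U))%E.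

Definition feeble_open {X : topologicalType} (f : nat -> X -> X) : Prop :=
  forall n : nat, (0 < n)%N ->
    forall U : set X, open U -> U !=set0 -> (interior (f n @` U)) !=set0.

(* Main.v *)
Require Import Defs.
From HB Require Import structures.
From mathcomp Require Import all_boot all_order all_algebra.
From mathcomp Require Import all_classical all_reals all_analysis.
Import Order.TTheory GRing.Theory Num.Theory.
Local Open Scope classical_set_scope.
Local Open Scope ring_scope.

Lemma comp_fromS0 {X : Type} (f : nat -> X -> X) n x :
  comp_from f 0 n.+1 x = f n.+1 (comp_from f 0 n x).
Proof. by []. Qed.

Lemma comp_from_split {X : Type} (f : nat -> X -> X) k n : (k <= n)%N ->
  forall a, comp_from f k n (comp_from f 0 k a) = comp_from f 0 n a.
Proof.
elim: n => [|n IH].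
  by rewrite leqn0 => /eqP -> a.
rewrite leq_eqVlt => /orP [/eqP -> a|kn a].
  by rewrite /= ltnn.
by rewrite /= kn /= IH.
Qed.

Lemma comp_from_surj {X : Type} (f : nat -> X -> X) :
  (forall n : nat, (0 < n)%N -> forall y : X, exists x : X, f n x = y) ->
  forall n y, exists x, comp_from f 0 n x = y.
Proof.
move=> hs; elim=> [|n IH] y; first by exists y.
have [z <-] := hs n.+1 isT y.
have [x <-] := IH z.
by exists x.
Qed.

Lemma comp_from_cont (R : realType) (X : metricType R) (f : nat -> X -> X) :
  (forall n : nat, (0 < n)%N -> continuous (f n)) ->
  forall n, continuous (comp_from f 0 n).
Proof.
move=> hc; elim=> [|n IH] x; first exact: cvg_id.
apply: (@continuous_comp _ _ _ (comp_from f 0 n) (f n.+1)); first exact: IH.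
exact: hc.
Qed.

Lemma diam_le (R : realType) (X : metricType R) (A B : set X) :
  A `<=` B -> (diam A <= diam B)%E.
Proof.
move=> AB; apply: ereal_sup_le => _ [a Aa [b Ab <-]].
by exists a; [exact: AB|exists b; [exact: AB|]].
Qed.

Theorem mainTheorem6 (R : realType) (X : metricType R) (f : nat -> X -> X) (k : nat) :
  compact [set: X] ->
  (forall n : nat, (0 < n)%N -> continuous (f n)) ->
  (forall n : nat, (0 < n)%N -> forall y : X, exists x : X, f n x = y) ->
  (sensitive f -> sensitive_trunc f k) /\
  (feeble_open f -> sensitive_trunc f k -> sensitive f).
Proof.
move=> _ hc hs; split.
- move=> [d [d0 Hs]]; exists d; split => // x U Ux.
  have [y yx] := @comp_from_surj _ f hs k x.
  have hW : forall m, exists W : set X, nbhs y W /\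
      forall j, (0 < j)%N -> (j <= m)%N -> forall a b, W a -> W b ->
        mdist (comp_from f 0 j a) (comp_from f 0 j b) < d.
    elim=> [|m [W [Wy HW]]].
      by exists setT; split; [exact: filterT| move=> [|]].
    have d20 : 0 < d / 2 by rewrite divr_gt0.
    have Hb := @comp_from_cont _ _ f hc m.+1 y _ (nbhsx_ballx (comp_from f 0 m.+1 y) _ d20).
    exists (W `&` (comp_from f 0 m.+1 @^-1` ball (comp_from f 0 m.+1 y) (d / 2))).
    split; first exact: filterI.
    move=> j j0; rewrite leq_eqVlt => /orP [/eqP ->|jm] a b [Wa Ba] [Wb Bb]; last first.
      exact: HW.
    move: Ba Bb; rewrite /= !ballEmdist /= => Ba Bb.
    rewrite (le_lt_trans (metric_triangle _ (comp_from f 0 m.+1 y) _)) //.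
    by rewrite (splitr d) ltrD // metric_sym.
  have [W [Wy HW]] := hW k.
  have Vy : nbhs y (W `&` (comp_from f 0 k @^-1` U)).
    apply: filterI => //; apply: (@comp_from_cont _ _ f hc k); by rewrite yx.
  have [n [n0 Hn]] := Hs y _ Vy.
  have [nk|kn] := leqP n k.
    exfalso; move: Hn; apply/negP; rewrite -leNgt.
    apply: ge_ereal_sup => _ [_ [a [Wa _] <-] [_ [b [Wb _] <-] <-]].
    by rewrite lee_fin ltW // HW.
  exists n; split => //; apply: (lt_le_trans Hn); apply: diam_le.
  move=> _ [a [_ Ua] <-].
  exists (comp_from f 0 k a) => //.
  by rewrite /omega_k comp_from_split // ltnW.
- move=> hf [d [d0 Hs]]; exists d; split => // x U Ux.
  have [V [oV Vx VU]] : exists V : set X, [/\ open V, V x & V `<=` U].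
    exists (interior U); split; first exact: open_interior.
      exact: Ux.
    exact: interior_subset.
  have hI : forall j, (j <= k)%N -> exists z : X, nbhs z (comp_from f 0 j @` V).
    elim=> [|j IH] jk.
      exists x; apply: filterS (open_nbhs_nbhs (conj oV Vx)) => a Va.
      by exists a.
    have [z Hz] := IH (ltnW jk).
    have [w Hw] := hf j.+1 isT (interior (comp_from f 0 j @` V))
                     (open_interior _) (ex_intro _ z Hz).
    exists w; apply: filterS Hw => _ [b Ib <-].
    have [a Va <-] := interior_subset Ib.
    by exists a.
  have [z Hz] := hI k (leqnn k).
  have [n [kn Hn]] := Hs z _ Hz.
  exists n; split; first exact: leq_ltn_trans kn.
  apply: (lt_le_trans Hn); apply: diam_le.
  move=> _ [_ [a Va <-] <-]; exists a; first exact: VU.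
  by rewrite /omega_k comp_from_split // ltnW.
Qed.
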